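(* Let $p$ be a prime, $m$ a positive integer, $q=p^m$, $n=q^2+1$. Let $\lambda\in\mathbb{F}_{q^2}^*$ have multiplicative order $r$, where $r\mid (q-1)$ and $\nu_2(r)=\nu_2(q-1)$. Let $\delta\in\mathbb{F}_{q^4}$ be a primitive $rn$-th root of unity with $\delta^n=\lambda$. For a positive integer $s$ with $s\mid(q^2-1)$, let $U_{s(q^2+1)}$ denote the set of all $s(q^2+1)$-th roots of unity in $\mathbb{F}_{q^4}^*$. Define $h(x)=x^{q-1}$ for $x\in U_{r(q^2+1)}$, and $h^{-1}(y_0)=\{x\in U_{r(q^2+1)}: h(x)=y_0\}$. Let $T=\{\delta^{-i}:0\le i\le q^2\}$ and $\lambda^jT=\{\lambda^j\delta^{-i}:0\le i\le q^2\}$ for $0\le j\le r-1$. Then $h$ maps $U_{r(q^2+1)}$ onto $U_{q^2+1}$. Moreover, for $y_0\in U_{q^2+1}$, if $h(x_0)=y_0$ for some $x_0\in U_{r(q^2+1)}$, then $h^{-1}(y_0)=\{\lambda^jx_0: 0\le j\le r-1\}$ and $|h^{-1}(y_0)\cap\lambda^jT|=1$ for every $0\le j\le r-1$.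
   Context: $\nu_2(\cdot)$ denotes the $2$-adic valuation of a positive integer. *)

(* Defs.v *)
From HB Require Import structures.
From mathcomp Require Import all_boot all_order all_algebra.
Set Implicit Arguments. Unset Strict Implicit. Unset Printing Implicit Defensive.
Import GRing.Theory.
Local Open Scope ring_scope.

Definition rootsU (F : fieldType) (s : nat) : pred F := fun x => x ^+ s == 1.

Definition hmap (F : fieldType) (q : nat) (x : F) : F := x ^+ (q - 1).

(* Main.v *)
Require Import Defs.
From HB Require Import structures.
From mathcomp Require Import all_boot all_order all_algebra.
From mathcomp Require Import zify.
Import GRing.Theory.
Local Open Scope ring_scope.
Lemma core (F : finFieldType) (q n r t : nat) (lambda delta : F) :
  (0 < r)%N -> (0 < n)%N -> (q - 1 = r * t)%N -> coprime t n ->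
  r.-primitive_root lambda ->
  (r * n)%N.-primitive_root delta -> delta ^+ n = lambda ->
  (forall x : F, rootsU (r * n) x -> rootsU n (hmap q x)) /\
  (forall y : F, rootsU n y ->
     exists2 x : F, rootsU (r * n) x & hmap q x = y) /\
  (forall y0 x0 : F, rootsU n y0 ->
     rootsU (r * n) x0 -> hmap q x0 = y0 ->
     [set x | rootsU (r * n) x && (hmap q x == y0)]
       = [set lambda ^+ j * x0 | j : 'I_r] /\
     (forall j : nat, (j < r)%N ->
        #|[set x | rootsU (r * n) x && (hmap q x == y0)]
          :&: [set lambda ^+ j * delta ^- i | i : 'I_n]| = 1%N)).
Proof.
move=> r0 n0 qt ctn plam prim dl.
have N0 : (0 < r * n)%N by rewrite muln_gt0 r0.
have dN : delta ^+ (r * n) = 1 := prim_expr_order prim.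
have d0 : delta != 0.
  apply/eqP => d0; move: dN; rewrite d0 expr0n gtn_eqF // => /eqP; by rewrite eq_sym oner_eq0.
have lr : lambda ^+ r = 1 := prim_expr_order plam.
have key : forall k, (delta ^+ (k * (q - 1)) == 1) = (n %| k)%N.
  move=> k; rewrite -(prim_order_dvd prim) qt mulnCA dvdn_pmul2l //.
  by rewrite Gauss_dvdl // coprime_sym.
have lamq : forall j, lambda ^+ (j * (q - 1)) = 1.
  by move=> j; rewrite qt mulnCA exprM lr expr1n.
split.
  move=> x; rewrite /rootsU /hmap => /eqP hx.
  by rewrite -exprM qt (mulnC r t) -mulnA mulnC exprM hx expr1n.
split.
  move=> y; rewrite /rootsU => /eqP hy.
  have yN : y ^+ (r * n) = 1 by rewrite mulnC exprM hy expr1n.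
  have [i hi] := prim_rootP prim yN.
  have ri : (r %| i)%N.
    rewrite -(dvdn_pmul2r n0) (prim_order_dvd prim) exprM -hi hy //.
  have [a _ ha] := Bezoutr t n0.
  move: ha; rewrite /coprime in ctn; rewrite (eqP ctn) => /dvdnP [c hc].
  set w := delta ^+ (i %/ r).
  have wr : w ^+ r = y by rewrite -exprM divnK // hi.
  exists (w ^+ a)^-1.
    have wN : w ^+ (r * n) = 1 by rewrite /w -exprM mulnC exprM dN expr1n.
    by rewrite /rootsU exprVn -exprM mulnC exprM wN expr1n invr1.
  have yy : y * y ^+ (a * t) = 1.
    by rewrite -exprS -addn1 addnC hc mulnC exprM hy expr1n.
  have y0 : y != 0 by apply/eqP => y0; move: yy; rewrite y0 mul0r => /eqP; rewrite eq_sym oner_eq0.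
  rewrite /hmap exprVn -exprM qt mulnCA exprM wr.
  by rewrite -[LHS]mul1r -yy mulfK // expf_neq0.
move=> y0 x0 _; rewrite /rootsU => /eqP hx0 hh.
have x00 : x0 != 0.
  apply/eqP => e; move: hx0; rewrite e expr0n gtn_eqF // => /eqP; by rewrite eq_sym oner_eq0.
split.
  apply/setP => x; rewrite inE; apply/idP/imsetP.
    case/andP => /eqP hx /eqP hhx.
    set z := x / x0.
    have zN : z ^+ (r * n) = 1 by rewrite exprMn exprVn hx hx0 invr1 mulr1.
    have [k hk] := prim_rootP prim zN.
    have : (n %| k)%N.
      rewrite -key exprM -hk /z exprMn exprVn.
      by rewrite /hmap in hhx hh; rewrite hhx -hh mulfV // expf_neq0.
    case/dvdnP => l hl.
    exists (Ordinal (ltn_pmod l r0)) => //=.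
    rewrite (prim_expr_mod plam) -dl -exprM mulnC -hl -hk /z mulfVK //.
  case=> j _ ->; rewrite /rootsU /hmap; apply/andP; split.
    by rewrite exprMn hx0 mulr1 -exprM mulnCA exprM lr expr1n.
  by rewrite exprMn -exprM lamq mul1r -hh.
move=> j jr.
have [a ha] := prim_rootP prim hx0.
have memc : forall i : nat, (hmap q (lambda ^+ j * delta ^- i) == y0) = (n %| a + i)%N.
  move=> i; rewrite -hh /hmap exprMn -exprM lamq mul1r exprVn -exprM ha -exprM.
  rewrite -key mulnDl exprD.
  have u0 : delta ^+ (i * (q - 1)) != 0 by rewrite expf_neq0.
  apply/eqP/eqP => [<-|h]; first by rewrite mulVf.
  by rewrite -[LHS]mul1r -h mulfK.
have memN : forall i : nat, rootsU (r * n) (lambda ^+ j * delta ^- i).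
  move=> i; rewrite /rootsU exprMn -exprM mulnCA exprM lr expr1n mul1r.
  by rewrite exprVn -exprM mulnC exprM dN expr1n invr1.
have i0n : ((n - a %% n) %% n < n)%N by rewrite ltn_pmod.
have hi0 : (n %| a + (n - a %% n) %% n)%N.
  rewrite /dvdn modnDmr {1}(divn_eq a n) -addnA subnKC; last by rewrite ltnW // ltn_pmod.
  by rewrite modnMDl modnn.
rewrite (_ : _ :&: _ = [set lambda ^+ j * delta ^- ((n - a %% n) %% n)]) ?cards1 //.
apply/setP => x; rewrite !inE; apply/andP/eqP.
  case=> /andP [_ hx] /imsetP [i _ e]; move: hx; rewrite e memc => hi.
  congr (_ * _ ^- _).
  have : (a + i == a + (n - a %% n) %% n %[mod n])%N.
    by move: hi hi0; rewrite /dvdn => /eqP -> /eqP ->.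
  rewrite eqn_modDl (modn_small (ltn_ord i)) (modn_small i0n) => /eqP e2; exact: e2.
move=> ->; split; first by apply/andP; split; [exact: memN | rewrite memc].
by apply/imsetP; exists (Ordinal i0n).
Qed.

Theorem lemma3p3 (p m r : nat) (F : finFieldType) (lambda delta : F) :
  prime p -> (0 < m)%N ->
  #|F| = ((p ^ m) ^ 4)%N ->
  (* lambda is a nonzero element of the subfield F_{q^2} = {x | x^(q^2) = x} *)
  lambda != 0 -> lambda ^+ ((p ^ m) ^ 2) = lambda ->
  r.-primitive_root lambda ->
  (r %| (p ^ m).-1)%N ->
  logn 2 r = logn 2 (p ^ m).-1 ->
  (r * ((p ^ m) ^ 2).+1)%N.-primitive_root delta ->
  delta ^+ ((p ^ m) ^ 2).+1 = lambda ->
  (* h maps U_{r(q^2+1)} into U_{q^2+1} ... *)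
  (forall x : F, rootsU (r * ((p ^ m) ^ 2).+1) x ->
     rootsU ((p ^ m) ^ 2).+1 (hmap (p ^ m) x)) /\
  (* ... and onto it *)
  (forall y : F, rootsU ((p ^ m) ^ 2).+1 y ->
     exists2 x : F, rootsU (r * ((p ^ m) ^ 2).+1) x & hmap (p ^ m) x = y) /\
  (forall y0 x0 : F, rootsU ((p ^ m) ^ 2).+1 y0 ->
     rootsU (r * ((p ^ m) ^ 2).+1) x0 -> hmap (p ^ m) x0 = y0 ->
     [set x | rootsU (r * ((p ^ m) ^ 2).+1) x && (hmap (p ^ m) x == y0)]
       = [set lambda ^+ j * x0 | j : 'I_r] /\
     (forall j : nat, (j < r)%N ->
        #|[set x | rootsU (r * ((p ^ m) ^ 2).+1) x && (hmap (p ^ m) x == y0)]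
          :&: [set lambda ^+ j * delta ^- i | i : 'I_((p ^ m) ^ 2).+1]| = 1%N)).
Proof.
move=> pp m0 _ _ _ plam rq lg prim dl.
have r0 : (0 < r)%N := prim_order_gt0 plam.
have q1 : (1 < p ^ m)%N.
  have p1 := prime_gt1 pp.
  have e : (p ^ m = p * p ^ m.-1)%N by rewrite -expnS prednK.
  have : (0 < p ^ m.-1)%N by rewrite expn_gt0 ltnW.
  rewrite e; nia.
set q := (p ^ m)%N in q1 rq lg *.
set t := (q.-1 %/ r)%N.
have qt : (q.-1 = r * t)%N by rewrite /t mulnC divnK.
have t0 : (0 < t)%N by move: qt; case: t => //; lia.
apply: (@core F q _ r t lambda delta) => //; first by rewrite subn1.
have todd : ~~ (2 %| t)%N.
  apply/negP => h2.
  have : (0 < logn 2 t)%N by rewrite logn_gt0 mem_primes /= t0 h2.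
  by move: lg; rewrite qt lognM //; lia.
rewrite /coprime.
have d2 : (gcdn t (q ^ 2).+1 %| 2)%N.
  have e : ((q ^ 2).+1 = q.-1 * q.+1 + 2)%N.
    by move: q1; case: (q) => // s _; rewrite /=; nia.
  have h1 : (gcdn t (q ^ 2).+1 %| q.-1 * q.+1)%N.
    by apply: dvdn_mulr; rewrite qt; apply: dvdn_mull; apply: dvdn_gcdl.
  by rewrite -(dvdn_addr _ h1) -e dvdn_gcdr.
have dt := dvdn_gcdl t (q ^ 2).+1.
move: d2 dt; case: (gcdn t (q ^ 2).+1) => [|[|[|d]]] //.
by move=> _ h; move: todd; rewrite h.
Qed.
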